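(* Let $n\ge0$. For every $m\ge0$, in $OPol_{n+1}$: (1) $x_{n+1}^{m+n+1}=-\sum_{q=0}^n\Big(\sum_{r=0}^m(-1)^{m+n+1-q-r}h_r^{(n+1)}e^{(n+1)}_{m+n+1-q-r}\Big)x_{n+1}^q$; (2) $x_1^{m+n+1}=-\sum_{p=0}^nx_1^p\Big(\sum_{s=0}^m(-1)^{m+n+1-p-s}e^{(n+1)}_{m+n+1-p-s}h^{(n+1)}_s\Big)$.
   Context: $\Bbbk$ is a field of characteristic $\neq2$. $OPol_N$ is the graded superalgebra generated by odd degree-2 elements $x_1,\dots,x_N$ with $x_jx_i=-x_ix_j$ ($i\ne j$). $e_r^{(N)}:=\sum_{1\le i_1<\cdots<i_r\le N}x_{i_1}\cdots x_{i_r}$ (zero for $r>N$) and $h_r^{(N)}:=\sum_{N\ge i_r\ge\cdots\ge i_1\ge1}x_{i_r}\cdots x_{i_1}$, with $e^{(N)}_0=h^{(N)}_0=1$. *)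

(* Defs.v *)
From HB Require Import structures.
From mathcomp Require Import all_boot all_order all_algebra.
Set Implicit Arguments. Unset Strict Implicit. Unset Printing Implicit Defensive.
Import GRing.Theory.
Local Open Scope ring_scope.

(* Generators x_1,...,x_N are x : 'I_N -> A (0-based: x_i = x (i-1)). *)

Definition odd_anticomm (A : pzRingType) (N : nat) (x : 'I_N -> A) : Prop :=
  forall i j : 'I_N, i != j -> x j * x i = - (x i * x j).

Definition e_OP (A : pzRingType) (N : nat) (x : 'I_N -> A) (r : nat) : A :=
  \sum_(t : r.-tuple 'I_N | sorted (fun i j : 'I_N => (i < j)%N) t)
     \prod_(i <- t) x i.

(* h_r^{(N)} = sum_{N >= i_r >= ... >= i_1 >= 1} x_{i_r} ... x_{i_1}
   (the tuple t lists i_r, ..., i_1, weakly decreasing) *)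
Definition h_OP (A : pzRingType) (N : nat) (x : 'I_N -> A) (r : nat) : A :=
  \sum_(t : r.-tuple 'I_N | sorted (fun i j : 'I_N => (j <= i)%N) t)
     \prod_(i <- t) x i.

(* Main.v *)
Require Import Defs.
From HB Require Import structures.
From mathcomp Require Import all_boot all_order all_algebra.
From mathcomp Require Import zify.
Import GRing.Theory.
Set Implicit Arguments. Unset Strict Implicit. Unset Printing Implicit Defensive.
Local Open Scope ring_scope.


Lemma sum_tuple_cons (T : finType) (R : nmodType) m (F : m.+1.-tuple T -> R) :
  \sum_(t : m.+1.-tuple T) F t = \sum_(i : T) \sum_(t : m.-tuple T) F [tuple of i :: t].
Proof.
rewrite pair_big /=.
rewrite (reindex (fun p : T * m.-tuple T => [tuple of p.1 :: p.2])) //=.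
exists (fun t : m.+1.-tuple T => (thead t, [tuple of behead t])).
- by move=> [a t] _ /=; congr pair; apply: val_inj.
- by move=> t _; rewrite /= -tuple_eta.
Qed.

Definition Eab (R : pzRingType) N (x : 'I_N -> R) (a b r : nat) : R :=
  \sum_(t : r.-tuple 'I_N | sorted (fun i j : 'I_N => (i < j)%N) t
        && all (fun i : 'I_N => (a <= i < b)%N) t) \prod_(i <- t) x i.
Definition Hab (R : pzRingType) N (x : 'I_N -> R) (a b r : nat) : R :=
  \sum_(t : r.-tuple 'I_N | sorted (fun i j : 'I_N => (j <= i)%N) t
        && all (fun i : 'I_N => (a <= i < b)%N) t) \prod_(i <- t) x i.

Lemma Eab0 (R : pzRingType) N (x : 'I_N -> R) a b : Eab x a b 0 = 1.
Proof.
rewrite /Eab (big_pred1 [tuple]); first by rewrite big_nil.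
by move=> t; rewrite (tuple0 t).
Qed.

Lemma Hab0 (R : pzRingType) N (x : 'I_N -> R) a b : Hab x a b 0 = 1.
Proof.
rewrite /Hab (big_pred1 [tuple]); first by rewrite big_nil.
by move=> t; rewrite (tuple0 t).
Qed.

Lemma EabS (R : pzRingType) N (x : 'I_N -> R) a b r :
  Eab x a b r.+1 = \sum_(i : 'I_N | (a <= i < b)%N) x i * Eab x i.+1 b r.
Proof.
rewrite /Eab big_mkcond sum_tuple_cons [RHS]big_mkcond; apply: eq_bigr => i _.
rewrite /=. case: ifP => Hi; last first.
  by apply: big1 => t _; rewrite /= andbF.
rewrite mulr_sumr [RHS]big_mkcond; apply: eq_bigr => t _.
have tr : transitive (fun i j : 'I_N => (i < j)%N).
  by move=> u v w H1 H2; apply: ltn_trans H1 H2.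
rewrite /= (path_sortedE tr) big_cons.
have -> : all (fun j : 'I_N => (i < j)%N) t && sorted (fun i j : 'I_N => (i < j)%N) t
      && all (fun j : 'I_N => (a <= j < b)%N) t
  = sorted (fun i j : 'I_N => (i < j)%N) t && all (fun j : 'I_N => (i < j < b)%N) t.
  rewrite andbC andbA andbC; congr andb; rewrite -all_predI; apply: eq_all => j /=.
  move: Hi; lia.
by case: ifP; rewrite ?mulr0.
Qed.

Lemma HabS (R : pzRingType) N (x : 'I_N -> R) a b r :
  Hab x a b r.+1 = \sum_(i : 'I_N | (a <= i < b)%N) x i * Hab x a i.+1 r.
Proof.
rewrite /Hab big_mkcond sum_tuple_cons [RHS]big_mkcond; apply: eq_bigr => i _.
rewrite /=. case: ifP => Hi; last first.
  by apply: big1 => t _; rewrite /= andbF.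
rewrite mulr_sumr [RHS]big_mkcond; apply: eq_bigr => t _.
have tr : transitive (fun i j : 'I_N => (j <= i)%N).
  by move=> u v w H1 H2; apply: leq_trans H2 H1.
rewrite /= (path_sortedE tr) big_cons.
have -> : all (fun j : 'I_N => (j <= i)%N) t && sorted (fun i j : 'I_N => (j <= i)%N) t
      && all (fun j : 'I_N => (a <= j < b)%N) t
  = sorted (fun i j : 'I_N => (j <= i)%N) t && all (fun j : 'I_N => (a <= j < i.+1)%N) t.
  rewrite andbC andbA andbC; congr andb; rewrite -all_predI; apply: eq_all => j /=.
  move: Hi; lia.
by case: ifP; rewrite ?mulr0.
Qed.

Definition Xn (R : pzRingType) n (x : 'I_n.+1 -> R) (i : nat) : R := x (inord i).

Lemma sum_ord_nat (R : nmodType) n a b (G : nat -> R) : (b <= n.+1)%N ->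
  \sum_(i : 'I_n.+1 | (a <= i < b)%N) G i = \sum_(a <= i < b) G i.
Proof.
move=> hb; rewrite big_geq_mkord (big_ord_widen_cond n.+1) //.
Qed.

Lemma ES (R : pzRingType) n (x : 'I_n.+1 -> R) a b r : (b <= n.+1)%N ->
  Eab x a b r.+1 = \sum_(a <= i < b) Xn x i * Eab x i.+1 b r.
Proof.
move=> hb; rewrite EabS -(@sum_ord_nat _ n a b (fun i => Xn x i * Eab x i.+1 b r)) //.
by apply: eq_bigr => i _; rewrite /Xn inord_val.
Qed.

Lemma HS (R : pzRingType) n (x : 'I_n.+1 -> R) a b r : (b <= n.+1)%N ->
  Hab x a b r.+1 = \sum_(a <= i < b) Xn x i * Hab x a i.+1 r.
Proof.
move=> hb; rewrite HabS -(@sum_ord_nat _ n a b (fun i => Xn x i * Hab x a i.+1 r)) //.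
by apply: eq_bigr => i _; rewrite /Xn inord_val.
Qed.

Lemma E_empty (R : pzRingType) n (x : 'I_n.+1 -> R) a b r : (b <= n.+1)%N -> (b <= a)%N ->
  Eab x a b r.+1 = 0.
Proof. by move=> hb hab; rewrite ES // big_geq. Qed.

Lemma H_empty (R : pzRingType) n (x : 'I_n.+1 -> R) a b r : (b <= n.+1)%N -> (b <= a)%N ->
  Hab x a b r.+1 = 0.
Proof. by move=> hb hab; rewrite HS // big_geq. Qed.

Lemma E_head (R : pzRingType) n (x : 'I_n.+1 -> R) a b r : (a < b <= n.+1)%N ->
  Eab x a b r.+1 = Xn x a * Eab x a.+1 b r + Eab x a.+1 b r.+1.
Proof.
case/andP=> hab hb; rewrite ES // big_ltn //; congr (_ + _).
by rewrite ES.
Qed.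

Lemma H_head (R : pzRingType) n (x : 'I_n.+1 -> R) a b r : (a <= b < n.+1)%N ->
  Hab x a b.+1 r.+1 = Xn x b * Hab x a b.+1 r + Hab x a b r.+1.
Proof.
case/andP=> hab hb; rewrite HS // big_nat_recr //= addrC; congr (_ + _).
by rewrite HS // ltnW.
Qed.

Lemma E_tail (R : pzRingType) n (x : 'I_n.+1 -> R) r : forall a b, (a <= b < n.+1)%N ->
  Eab x a b.+1 r.+1 = Eab x a b r.+1 + Eab x a b r * Xn x b.
Proof.
elim: r => [|r IH] a b /andP[hab hb].
  rewrite ES // big_nat_recr //= !Eab0 ES ?(ltnW hb) // mul1r; congr (_ + _).
  by apply: eq_bigr => i _; rewrite !Eab0.
  by rewrite mulr1.
rewrite ES // big_nat_recr //= E_empty // mulr0 addr0.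
rewrite (ES _ _ _ (ltnW hb)) (ES _ _ _ (ltnW hb)) mulr_suml -big_split /=.
apply: eq_big_nat => i /andP[hai hib].
by rewrite IH ?hib ?hb // mulrDr mulrA.
Qed.

Lemma H_tail (R : pzRingType) n (x : 'I_n.+1 -> R) r : forall a b, (a < b <= n.+1)%N ->
  Hab x a b r.+1 = Hab x a b r * Xn x a + Hab x a.+1 b r.+1.
Proof.
elim: r => [|r IH] a b /andP[hab hb].
  rewrite HS // big_ltn // !Hab0 mulr1 mul1r; congr (_ + _).
  by rewrite HS //; apply: eq_bigr => i _; rewrite !Hab0.
rewrite HS // (HS _ _ _ hb) (HS _ _ _ hb) mulr_suml.
rewrite (eq_big_nat _ _ (F2 := fun i => Xn x i * Hab x a i.+1 r * Xn x a
                                 + Xn x i * Hab x a.+1 i.+1 r.+1)); last first.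
  move=> i /andP[hai hib].
  rewrite IH; first by rewrite mulrDr mulrA.
  by apply/andP; split; [rewrite ltnS | apply: leq_trans hib hb].
by rewrite big_split /= [X in _ + X = _]big_ltn // H_empty ?(leq_trans hab hb) // mulr0 add0r.
Qed.

Lemma E_zero (R : pzRingType) n (x : 'I_n.+1 -> R) r : forall a b, (b <= n.+1)%N ->
  (b - a < r)%N -> Eab x a b r = 0.
Proof.
elim: r => [//|r IH] a b hb hr.
rewrite ES //; rewrite big_nat big1 // => i /andP[hai hib].
by rewrite IH ?mulr0 //; lia.
Qed.

Lemma E_triv (R : pzRingType) n (x : 'I_n.+1 -> R) a r : (a <= n.+1)%N ->
  Eab x a a r = (r == 0)%:R.
Proof. by case: r => [|r] ha; rewrite ?Eab0 ?E_empty. Qed.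

Lemma H_triv (R : pzRingType) n (x : 'I_n.+1 -> R) a r : (a <= n.+1)%N ->
  Hab x a a r = (r == 0)%:R.
Proof. by case: r => [|r] ha; rewrite ?Hab0 ?H_empty. Qed.

Lemma sign_comm (R : pzRingType) (y : R) s : (-1) ^+ s * y = y * (-1) ^+ s.
Proof. by rewrite (commr_sign y s). Qed.

Lemma D1 (R : pzRingType) n (x : 'I_n.+1 -> R) N : (N <= n.+1)%N -> forall u,
  \sum_(s < u.+1) (-1) ^+ s * Hab x 0 N (u - s) * Eab x 0 N s = (u == 0)%:R.
Proof.
elim: N => [|N IH] hN u.
  rewrite big_ord_recl /= big1 ?addr0; last first.
    by move=> s _; rewrite E_triv // mulr0.
  by rewrite subn0 expr0 mul1r Eab0 mulr1 H_triv.
have hN' : (N <= n.+1)%N by apply: ltnW.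
set y := Xn x N.
have A : forall u, \sum_(s < u.+1) (-1) ^+ s * Hab x 0 N.+1 (u - s) * Eab x 0 N s = y ^+ u.
  elim=> [|v IHv].
    by rewrite big_ord1 subn0 !expr0 mul1r Hab0 Eab0 mulr1.
  rewrite big_ord_recr /= subnn Hab0 mulr1.
  have hD := IH hN' v.+1.
  rewrite big_ord_recr /= subnn Hab0 mulr1 in hD.
  rewrite (eq_bigr (fun s : 'I_v.+1 => y * ((-1) ^+ s * Hab x 0 N.+1 (v - s) * Eab x 0 N s)
       + (-1) ^+ s * Hab x 0 N (v.+1 - s) * Eab x 0 N s)); last first.
    move=> s _; rewrite subSn; last by rewrite -ltnS.
    rewrite H_head //=.
    rewrite mulrDr mulrDl; congr (_ + _).
    by rewrite !mulrA sign_comm.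
  rewrite big_split /= -mulr_sumr IHv -addrA hD /= addr0.
  by rewrite exprS.
case: u => [|u].
  by rewrite big_ord1 subn0 !expr0 mul1r Hab0 Eab0 mulr1.
rewrite big_ord_recl /= subn0 expr0 mul1r Eab0 mulr1.
have hA1 := A u.+1.
rewrite big_ord_recl /= subn0 expr0 mul1r Eab0 mulr1 in hA1.
rewrite (eq_bigr (fun s : 'I_u.+1 => (-1) ^+ s.+1 * Hab x 0 N.+1 (u - s) * Eab x 0 N s.+1
       - (-1) ^+ s * Hab x 0 N.+1 (u - s) * Eab x 0 N s * y)); last first.
  move=> s _; rewrite /bump /= add1n subSS E_tail //.
  by rewrite mulrDr exprS mulN1r !mulNr !mulrA.
rewrite big_split /= addrA.
have -> : \sum_(i < u.+1) (-1) ^+ (bump 0 i) * Hab x 0 N.+1 (u.+1 - bump 0 i) * Eab x 0 N (bump 0 i)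
   = \sum_(i < u.+1) (-1) ^+ i.+1 * Hab x 0 N.+1 (u - i) * Eab x 0 N i.+1.
  by apply: eq_bigr => s _; rewrite /bump /= add1n subSS.
rewrite hA1 sumrN -mulr_suml A.
by rewrite exprSr subrr.
Qed.

Lemma D2 (R : pzRingType) n (x : 'I_n.+1 -> R) k : (k <= n.+1)%N -> forall u,
  \sum_(s < u.+1) (-1) ^+ s * Eab x (n.+1 - k) n.+1 s * Hab x (n.+1 - k) n.+1 (u - s)
   = (u == 0)%:R.
Proof.
elim: k => [|k IH] hk u.
  rewrite subn0 big_ord_recl /= big1 ?addr0; last first.
    by move=> s _; rewrite E_triv //= mulr0n mulr0 mul0r.
  by rewrite subn0 expr0 mul1r Eab0 mul1r H_triv.
have hk' : (k <= n.+1)%N by apply: ltnW.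
set a := (n.+1 - k.+1)%N.
have ha : (n.+1 - k = a.+1)%N by rewrite /a; lia.
have hab : (a < n.+1 <= n.+1)%N by rewrite /a; apply/andP; split => //; lia.
rewrite ha in IH.
set y := Xn x a.
have A : forall u, \sum_(s < u.+1) (-1) ^+ s * Eab x a.+1 n.+1 s * Hab x a n.+1 (u - s) = y ^+ u.
  elim=> [|v IHv].
    by rewrite big_ord1 subn0 !expr0 mul1r Hab0 Eab0 mulr1.
  rewrite big_ord_recr /= subnn Hab0 mulr1.
  have hD := IH hk' v.+1.
  rewrite big_ord_recr /= subnn Hab0 mulr1 in hD.
  rewrite (eq_bigr (fun s : 'I_v.+1 => ((-1) ^+ s * Eab x a.+1 n.+1 s * Hab x a n.+1 (v - s)) * y
       + (-1) ^+ s * Eab x a.+1 n.+1 s * Hab x a.+1 n.+1 (v.+1 - s))); last first.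
    move=> s _; rewrite subSn; last by rewrite -ltnS.
    rewrite H_tail //=.
    by rewrite mulrDr !mulrA.
  rewrite big_split /= -mulr_suml IHv -addrA hD /= addr0.
  by rewrite exprSr.
case: u => [|u].
  by rewrite big_ord1 subn0 !expr0 mul1r Hab0 Eab0 mulr1.
rewrite big_ord_recl /= subn0 expr0 mul1r Eab0 mul1r.
have hA1 := A u.+1.
rewrite big_ord_recl /= subn0 expr0 mul1r Eab0 mul1r in hA1.
rewrite (eq_bigr (fun s : 'I_u.+1 => (-1) ^+ s.+1 * Eab x a.+1 n.+1 s.+1 * Hab x a n.+1 (u - s)
       - y * ((-1) ^+ s * Eab x a.+1 n.+1 s * Hab x a n.+1 (u - s)))); last first.
  move=> s _; rewrite /bump /= add1n subSS E_head //.
  rewrite mulrDr mulrDl addrC; congr (_ + _).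
  by rewrite exprS mulN1r !mulNr !mulrA sign_comm.
rewrite big_split /= addrA.
have -> : \sum_(i < u.+1) (-1) ^+ (bump 0 i) * Eab x a.+1 n.+1 (bump 0 i) * Hab x a n.+1 (u.+1 - bump 0 i)
   = \sum_(i < u.+1) (-1) ^+ i.+1 * Eab x a.+1 n.+1 i.+1 * Hab x a n.+1 (u - i).
  by apply: eq_bigr => s _; rewrite /bump /= add1n subSS.
rewrite hA1 sumrN -mulr_sumr A.
by rewrite exprS subrr.
Qed.

Lemma assembly (R : pzRingType) n (e h : nat -> R) (y : R) :
  e 0%N = 1 -> h 0%N = 1 -> (forall s, (n.+1 < s)%N -> e s = 0) ->
  \sum_(s < n.+2) (-1) ^+ s * e s * y ^+ (n.+1 - s) = 0 ->
  (forall u, (0 < u)%N -> \sum_(s < u.+1) (-1) ^+ s * h (u - s)%N * e s = 0) ->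
  forall m, y ^+ (m + n + 1) = - \sum_(q < n.+1)
     (\sum_(r < m.+1) (-1) ^+ (m + n + 1 - q - r) * h r * e (m + n + 1 - q - r)%N)
     * y ^+ q.
Proof.
move=> e0 h0 ez HF HD.
have base : y ^+ n.+1 = - \sum_(q < n.+1) (-1) ^+ (n.+1 - q) * e (n.+1 - q)%N * y ^+ q.
  move: HF; rewrite (reindex_inj rev_ord_inj) /= big_ord_recr /= subnn e0 expr0 !mul1r subn0.
  rewrite (eq_bigr (fun q : 'I_n.+1 => (-1) ^+ (n.+1 - q) * e (n.+1 - q)%N * y ^+ q)).
    by move/eqP; rewrite addrC addr_eq0 => /eqP.
  move=> q _ /=; rewrite subSS subKn //.
  by apply: ltnW; apply: ltn_ord.
have Dr : forall u, (0 < u)%N ->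
    \sum_(r < u.+1) (-1) ^+ (u - r) * h r * e (u - r)%N = 0.
  move=> u hu; rewrite -[RHS](HD u hu) [LHS](reindex_inj rev_ord_inj) /=; apply: eq_bigr => s _.
  by rewrite subSS subKn // -ltnS.
elim=> [|m IH].
  rewrite add0n addn1 base; congr (- _); apply: eq_bigr => q _.
  by rewrite big_ord1 /= !subn0 h0 mulr1.
have hexp : (m.+1 + n + 1 = (m + n + 1).+1)%N by lia.
rewrite {1}hexp exprSr IH mulNr mulr_suml big_ord_recr /=.
have cmn : \sum_(r < m.+1) (-1) ^+ (m + n + 1 - n - r) * h r * e (m + n + 1 - n - r)%N
    = - h m.+1.
  have := Dr m.+1 (ltn0Sn m); rewrite big_ord_recr /= subnn expr0 mul1r e0 mulr1.
  move/eqP; rewrite addr_eq0 => /eqP <-; apply: eq_bigr => r _.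
  by have -> : (m + n + 1 - n - r = m.+1 - r)%N by lia.
rewrite cmn -mulrA -exprSr base mulrNN.
have c0 : \sum_(r < m.+2) (-1) ^+ ((m + n + 1).+1 - 0 - r) * h r * e ((m + n + 1).+1 - 0 - r)%N
    = (-1) ^+ n.+1 * h m.+1 * e n.+1.
  rewrite big_ord_recr /= big1 ?add0r.
    by have -> : ((m + n + 1).+1 - 0 - m.+1 = n.+1)%N by lia.
  by move=> r _; rewrite ez ?mulr0 //=; have := ltn_ord r; lia.
rewrite [in RHS]big_ord_recl /= c0.
rewrite [X in h m.+1 * X]big_ord_recl /=.
rewrite [in RHS](eq_bigr (fun i : 'I_n =>
   (\sum_(r < m.+1) (-1) ^+ (m + n + 1 - i - r) * h r * e (m + n + 1 - i - r)%N) * y ^+ (bump 0 i)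
   + (-1) ^+ (n - i) * h m.+1 * e (n - i)%N * y ^+ (bump 0 i))); last first.
  move=> i _; rewrite -mulrDl; congr (_ * _).
  rewrite [LHS]big_ord_recr /=; congr (_ + _).
  by have -> : (m.+1 + n + 1 - bump 0 i - m.+1 = n - i)%N by rewrite /bump /=; lia.
rewrite big_split /= mulrDr mulr_sumr.
congr (- _).
rewrite addrCA; congr (_ + (_ + _)).
- by rewrite subn0 !mulrA -sign_comm.
- by apply: eq_bigr => i _; rewrite -mulrA -exprSr /bump /= add1n.
- by apply: eq_bigr => i _; rewrite /bump /= add1n subSS !mulrA -sign_comm.
Qed.

Lemma F1 (R : pzRingType) n (x : 'I_n.+1 -> R) :
  \sum_(s < n.+2) (-1) ^+ s * Eab x 0 n.+1 s * Xn x n ^+ (n.+1 - s) = 0.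
Proof.
set y := Xn x n.
pose G s := (-1) ^+ s * Eab x 0 n s * y ^+ (n.+1 - s).
rewrite big_ord_recl /= expr0 mul1r Eab0 mul1r subn0.
rewrite (eq_bigr (fun s : 'I_n.+1 => G s.+1 - G s)); last first.
  move=> s _; rewrite /G /bump /= add1n subSS E_tail //=.
  have hs : (s <= n)%N by rewrite -ltnS.
  rewrite (subSn hs) exprS mulrDr mulrDl exprS mulN1r !mulNr; congr (_ + _).
  by rewrite -!mulrA.
rewrite -(big_mkord xpredT (fun s => G s.+1 - G s)) telescope_sumr // /G.
have -> : Eab x 0 n n.+1 = 0 by apply: E_zero => //; rewrite subn0.
rewrite subnn expr0 mulr1 mulr0 add0r expr0 mul1r Eab0 mul1r subn0.
by rewrite subrr.
Qed.

Lemma F2 (R : pzRingType) n (x : 'I_n.+1 -> R) :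
  \sum_(s < n.+2) Xn x 0 ^+ (n.+1 - s) * (Eab x 0 n.+1 s * (-1) ^+ s) = 0.
Proof.
set y := Xn x 0.
pose G s := y ^+ (n.+1 - s) * (Eab x 1 n.+1 s * (-1) ^+ s).
rewrite big_ord_recl /= expr0 mulr1 Eab0 mulr1 subn0.
rewrite (eq_bigr (fun s : 'I_n.+1 => G s.+1 - G s)); last first.
  move=> s _; rewrite /G /bump /= add1n subSS E_head //=.
  have hs : (s <= n)%N by rewrite -ltnS.
  rewrite (subSn hs) mulrDl mulrDr addrC; congr (_ + _).
  by rewrite exprS mulN1r !mulrN exprSr !mulrA.
rewrite -(big_mkord xpredT (fun s => G s.+1 - G s)) telescope_sumr // /G.
have -> : Eab x 1 n.+1 n.+1 = 0 by apply: E_zero => //; rewrite subn1.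
rewrite subnn expr0 mul0r mulr0 add0r expr0 mulr1 Eab0 mulr1 subn0.
by rewrite subrr.
Qed.

Lemma conv_mul (R : pzRingType) (a b : R) : ((a : R^c) * (b : R^c) : R^c) = (b * a : R).
Proof. by []. Qed.
Lemma conv_exp (R : pzRingType) (a : R) k : ((a : R^c) ^+ k : R^c) = (a ^+ k : R).
Proof. elim: k => [|k IH] //. by rewrite exprS conv_mul IH exprSr. Qed.

Lemma eOP_E (R : pzRingType) n (x : 'I_n.+1 -> R) r : e_OP x r = Eab x 0 n.+1 r.
Proof.
rewrite /e_OP /Eab; apply: eq_bigl => t.
by rewrite (@eq_all _ _ predT) ?all_predT ?andbT // => i; rewrite /= ltn_ord.
Qed.

Lemma hOP_H (R : pzRingType) n (x : 'I_n.+1 -> R) r : h_OP x r = Hab x 0 n.+1 r.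
Proof.
rewrite /h_OP /Hab; apply: eq_bigl => t.
by rewrite (@eq_all _ _ predT) ?all_predT ?andbT // => i; rewrite /= ltn_ord.
Qed.

Theorem mainTheorem10 (k : fieldType) (Hk : (2 \notin [pchar k])%N)
  (A : algType k) (n : nat) (x : 'I_n.+1 -> A) (Hx : odd_anticomm x) (m : nat) :
  x ord_max ^+ (m + n + 1) =
    - \sum_(q < n.+1)
        (\sum_(r < m.+1)
           (-1) ^+ (m + n + 1 - q - r) * h_OP x r * e_OP x (m + n + 1 - q - r))
        * x ord_max ^+ q
  /\
  x ord0 ^+ (m + n + 1) =
    - \sum_(p < n.+1)
        x ord0 ^+ p *
        (\sum_(s < m.+1)
           (-1) ^+ (m + n + 1 - p - s) * e_OP x (m + n + 1 - p - s) * h_OP x s).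
Proof.
have hmax : x ord_max = Xn x n by rewrite /Xn; congr x; apply: val_inj; rewrite /= inordK.
have h0 : x ord0 = Xn x 0 by rewrite /Xn; congr x; apply: val_inj; rewrite /= inordK.
split.
  have := @assembly A n (fun s => Eab x 0 n.+1 s) (fun r => Hab x 0 n.+1 r) (Xn x n)
    (Eab0 _ _ _) (Hab0 _ _ _) _ (F1 x) _ m.
  rewrite hmax => -> //.
  - congr (- _); apply: eq_bigr => q _; congr (_ * _); apply: eq_bigr => r _.
    by rewrite eOP_E hOP_H.
  - by move=> s hs; apply: E_zero => //; rewrite subn0.
  - move=> u hu; rewrite (D1 x (leqnn n.+1) u); by case: u hu.
have := @assembly A^c n (fun s => Eab x 0 n.+1 s) (fun r => Hab x 0 n.+1 r) (Xn x 0)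
  (Eab0 x 0 n.+1) (Hab0 x 0 n.+1) _ _ _ m.
move=> H.
refine ((fun HH => _) (H _ _ _)).
- rewrite conv_exp in HH; rewrite h0 HH.
  congr (- _); apply: eq_bigr => q _.
  rewrite conv_mul conv_exp; congr (_ * _).
  apply: eq_bigr => r _.
  by rewrite !conv_mul conv_exp eOP_E hOP_H sign_comm -!mulrA -sign_comm.
- by move=> s hs; apply: (@E_zero A n x s 0 n.+1) => //; rewrite subn0.
- transitivity (\sum_(s < n.+2) Xn x 0 ^+ (n.+1 - s) * (Eab x 0 n.+1 s * (-1) ^+ s) : A);
    last exact: F2 x.
  by apply: eq_bigr => s _; rewrite !conv_mul !conv_exp.
- case=> [//|u] _.
  have hD := D2 x (leqnn n.+1) u.+1; rewrite subnn /= mulr0n in hD.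
  transitivity (\sum_(s < u.+2) Eab x 0 n.+1 s * (Hab x 0 n.+1 (u.+1 - s) * (-1) ^+ s) : A).
    by apply: eq_bigr => s _; rewrite !conv_mul !conv_exp.
  apply: (etrans _ hD); apply: eq_bigr => s _.
  by rewrite sign_comm -!mulrA -sign_comm.
Qed.
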